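(* Let $\nu>0$ and $\epsilon\in\{0,1\}$, and let $\mathcal T:(X,T,U)\mapsto(x,t,u)$ be $$x=\frac X\nu+\frac T{\nu^3}-\frac T{\sqrt\nu},\qquad t=\frac T{\sqrt\nu},\qquad u=\frac U{\sqrt\nu}+\frac13\nu^{-5/2}-\frac13 .$$ Then the equation $$-2\nu^2U_XU_{XX}+3\epsilon U_XU-\nu^2U_{XXX}U+\tfrac23U_{XXX}-\tfrac23\nu^{5/2}U_{XXX}+\epsilon U_T-\nu^2U_{XXT}=0\qquad(E_{\nu,\epsilon})$$ describes pseudo-spherical surfaces with associated one-forms $\mathcal T^*\omega^i$, $i=1,2,3$, where $\omega^i$ are the one-forms of the following setting: for real $\alpha\neq0$, $\beta$ with $\alpha^2+\beta^2-1=\epsilon((\beta-1)/\alpha)^2$ and $m=u_{xx}-\epsilon u$, $\omega^1=(m-\beta+\epsilon\alpha^{-2}(\beta-1))dx+(-\beta u_x/\alpha-\beta/\alpha^2-um-1+u\beta+u_x/\alpha+1/\alpha^2)dt$, $\omega^2=\alpha\,dx+(-\beta/\alpha-\alpha u+1/\alpha+u_x)dt$, $\omega^3=(m+1)dx+(\epsilon u\alpha^{-2}(\beta-1)-um+1/\alpha^2+u_x/\alpha-u-\beta/\alpha^2-\beta u_x/\alpha)dt$. Here the pullback is computed by substituting $dx=\nu^{-1}dX+(\nu^{-3}-\nu^{-1/2})dT$, $dt=\nu^{-1/2}dT$, $u=U/\sqrt\nu+\frac13\nu^{-5/2}-\frac13$, $u_x=\sqrt\nu\,U_X$, $u_{x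x}=\nu^{3/2}U_{XX}$.
   Context: An equation describes pseudo-spherical surfaces if there are one-forms $\omega^i=f_{i1}dX+f_{i2}dT\neq0$ ($i=1,2,3$), with coefficients smooth functions of the independent variables, $U$ and finitely many derivatives of $U$, whose pullbacks by any solution satisfy $d\omega^1=\omega^3\wedge\omega^2$, $d\omega^2=\omega^1\wedge\omega^3$, $d\omega^3=\omega^1\wedge\omega^2$. *)

(* Defs.v *)
From Stdlib Require Import Reals List.
From Coquelicot Require Import Coquelicot.
Open Scope R_scope.

Definition DX (f : R -> R -> R) : R -> R -> R :=
  fun X T => Derive (fun y => f y T) X.
Definition DT (f : R -> R -> R) : R -> R -> R :=
  fun X T => Derive (fun s => f X s) T.

Fixpoint Dw (w : list bool) (f : R -> R -> R) : R -> R -> R :=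
  match w with
  | nil => f
  | b :: w' => (if b then DX else DT) (Dw w' f)
  end.

Definition smooth2 (f : R -> R -> R) : Prop :=
  forall (w : list bool) (X T : R),
    ex_derive (fun y => Dw w f y T) X /\
    ex_derive (fun s => Dw w f X s) T /\
    continuous (fun p : R * R => Dw w f (fst p) (snd p)) (X, T).

Definition eqE (nu eps : R) (U : R -> R -> R) (X T : R) : R :=
  let UX := DX U X T in
  let UXX := DX (DX U) X T in
  let UXXX := DX (DX (DX U)) X T in
  let UT := DT U X T in
  let UXXT := DT (DX (DX U)) X T in
  let V := U X T in
  - 2 * nu ^ 2 * UX * UXX + 3 * eps * UX * V - nu ^ 2 * UXXX * V
  + 2 / 3 * UXXX - 2 / 3 * (nu ^ 2 * sqrt nu) * UXXX
  + eps * UT - nu ^ 2 * UXXT.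

(* Coefficients of the one-forms omega^i = f_i1 dx + f_i2 dt, as functions
   of the jet variables (u, u_x, u_xx); m = u_xx - eps u. *)
Section Forms.
Variables (alpha beta eps u ux uxx : R).
Let m := uxx - eps * u.
Definition om1x := m - beta + eps * / alpha ^ 2 * (beta - 1).
Definition om1t := - beta * ux / alpha - beta / alpha ^ 2 - u * m - 1 + u * beta
                   + ux / alpha + 1 / alpha ^ 2.
Definition om2x := alpha.
Definition om2t := - beta / alpha - alpha * u + 1 / alpha + ux.
Definition om3x := m + 1.
Definition om3t := eps * u * / alpha ^ 2 * (beta - 1) - u * m + 1 / alpha ^ 2
                   + ux / alpha - u - beta / alpha ^ 2 - beta * ux / alpha.
End Forms.

(* The jet substitution induced by T : (X,T,U) |-> (x,t,u):
   u = U/sqrt nu + (1/3) nu^(-5/2) - 1/3, u_x = sqrt nu U_X,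
   u_xx = nu^(3/2) U_XX. *)
Definition sub_u (nu U0 : R) : R := U0 / sqrt nu + / 3 * / (nu ^ 2 * sqrt nu) - / 3.
Definition sub_ux (nu U1 : R) : R := sqrt nu * U1.
Definition sub_uxx (nu U2 : R) : R := nu * sqrt nu * U2.

(* Pullback of a dx + b dt, using dx = nu^-1 dX + (nu^-3 - nu^(-1/2)) dT and
   dt = nu^(-1/2) dT: returns the dX and dT coefficients. *)
Definition pbX (nu a b : R) : R := a / nu.
Definition pbT (nu a b : R) : R := a * (/ nu ^ 3 - / sqrt nu) + b / sqrt nu.

Definition F1X (nu eps alpha beta U0 U1 U2 : R) : R :=
  let u := sub_u nu U0 in let ux := sub_ux nu U1 in let uxx := sub_uxx nu U2 in
  pbX nu (om1x alpha beta eps u uxx) (om1t alpha beta eps u ux uxx).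
Definition F1T (nu eps alpha beta U0 U1 U2 : R) : R :=
  let u := sub_u nu U0 in let ux := sub_ux nu U1 in let uxx := sub_uxx nu U2 in
  pbT nu (om1x alpha beta eps u uxx) (om1t alpha beta eps u ux uxx).
Definition F2X (nu eps alpha beta U0 U1 U2 : R) : R :=
  let u := sub_u nu U0 in let ux := sub_ux nu U1 in
  pbX nu (om2x alpha) (om2t alpha beta u ux).
Definition F2T (nu eps alpha beta U0 U1 U2 : R) : R :=
  let u := sub_u nu U0 in let ux := sub_ux nu U1 in
  pbT nu (om2x alpha) (om2t alpha beta u ux).
Definition F3X (nu eps alpha beta U0 U1 U2 : R) : R :=
  let u := sub_u nu U0 in let ux := sub_ux nu U1 in let uxx := sub_uxx nu U2 in
  pbX nu (om3x eps u uxx) (om3t alpha beta eps u ux uxx).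
Definition F3T (nu eps alpha beta U0 U1 U2 : R) : R :=
  let u := sub_u nu U0 in let ux := sub_ux nu U1 in let uxx := sub_uxx nu U2 in
  pbT nu (om3x eps u uxx) (om3t alpha beta eps u ux uxx).

Definition along (F : R -> R -> R -> R) (U : R -> R -> R) : R -> R -> R :=
  fun X T => F (U X T) (DX U X T) (DX (DX U) X T).

Definition form_nonzero (FX FT : R -> R -> R -> R) : Prop :=
  exists U0 U1 U2 : R, FX U0 U1 U2 <> 0 \/ FT U0 U1 U2 <> 0.

(* Structure equations for pulled-back forms w^i = a_i dX + b_i dT:
   d w = (D_X b - D_T a) dX^dT, w^i ^ w^j = (a_i b_j - b_i a_j) dX^dT.
     d w1 = w3 ^ w2,  d w2 = w1 ^ w3,  d w3 = w1 ^ w2. *)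
Definition structure_eqs (a1 b1 a2 b2 a3 b3 : R -> R -> R) (X T : R) : Prop :=
  DX b1 X T - DT a1 X T = a3 X T * b2 X T - b3 X T * a2 X T /\
  DX b2 X T - DT a2 X T = a1 X T * b3 X T - b1 X T * a3 X T /\
  DX b3 X T - DT a3 X T = a1 X T * b2 X T - b1 X T * a2 X T.

(* Main.v *)
Require Import Defs.
From Stdlib Require Import Reals Lra List.
From Coquelicot Require Import Coquelicot.
Open Scope R_scope.

Lemma DXe f X T l : is_derive (fun y => f y T) X l -> DX f X T = l.
Proof. intros H. unfold DX. now apply is_derive_unique. Qed.
Lemma DTe f X T l : is_derive (fun y => f X y) T l -> DT f X T = l.
Proof. intros H. unfold DT. now apply is_derive_unique. Qed.

Lemma comb L R E r k1 k2 : E = 0 -> r = 0 -> L - R - (k1*E + k2*r) = 0 -> L = R.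
Proof. intros -> ->. lra. Qed.

Ltac sm hs :=
  repeat split;
  first
  [ exact (proj1 (hs nil _ _)) | exact (proj1 (hs (true::nil) _ _))
  | exact (proj1 (hs (true::true::nil) _ _))
  | exact (proj1 (proj2 (hs nil _ _))) | exact (proj1 (proj2 (hs (true::nil) _ _)))
  | exact (proj1 (proj2 (hs (true::true::nil) _ _))) ].

Ltac unf := unfold along, F1X, F1T, F2X, F2T, F3X, F3T, pbX, pbT,
  om1x, om1t, om2x, om2t, om3x, om3t, sub_u, sub_ux, sub_uxx.

Ltac drw hs :=
  match goal with
  | |- context [DX (along ?F ?U) ?X ?T] =>
     erewrite (DXe (along F U) X T); [| unf; auto_derive; [sm hs | reflexivity]]
  | |- context [DT (along ?F ?U) ?X ?T] =>
     erewrite (DTe (along F U) X T); [| unf; auto_derive; [sm hs | reflexivity]]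
  end.


Lemma nz_helper (f : R -> R) c : c <> 0 -> f 1 - f 0 = c ->
  exists U2, f U2 <> 0.
Proof.
intros hc h. destruct (Req_dec (f 0) 0) as [e|e].
- exists 1. intro e1. apply hc. rewrite <- h, e, e1. ring.
- exists 0. exact e.
Qed.

Theorem corollary1 (nu eps alpha beta : R) :
  0 < nu -> (eps = 0 \/ eps = 1) -> alpha <> 0 ->
  alpha ^ 2 + beta ^ 2 - 1 = eps * ((beta - 1) / alpha) ^ 2 ->
  form_nonzero (F1X nu eps alpha beta) (F1T nu eps alpha beta) /\
  form_nonzero (F2X nu eps alpha beta) (F2T nu eps alpha beta) /\
  form_nonzero (F3X nu eps alpha beta) (F3T nu eps alpha beta) /\
  (forall U : R -> R -> R, smooth2 U ->
     (forall X T, eqE nu eps U X T = 0) ->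
     forall X T,
       structure_eqs
         (along (F1X nu eps alpha beta) U) (along (F1T nu eps alpha beta) U)
         (along (F2X nu eps alpha beta) U) (along (F2T nu eps alpha beta) U)
         (along (F3X nu eps alpha beta) U) (along (F3T nu eps alpha beta) U)
         X T).
Proof.
intros hnu heps ha hrel.
assert (hs0 : 0 < sqrt nu) by (apply sqrt_lt_R0; lra).
assert (Hn : nu = sqrt nu * sqrt nu) by (rewrite sqrt_sqrt; lra).
assert (Hrel : alpha ^ 2 + beta ^ 2 - 1 - eps * ((beta - 1) / alpha) ^ 2 = 0) by lra.
split; [| split; [| split]].
- destruct (nz_helper (fun U2 => F1X nu eps alpha beta 0 0 U2) (sqrt nu))
    as [U2 h].
  + lra.
  + cbv beta. unf. field. lra.
  + exists 0, 0, U2. now left.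
- exists 0, 0, 0. left. unf. unfold Rdiv.
  apply Rmult_integral_contrapositive_currified; [exact ha|].
  apply Rinv_neq_0_compat. lra.
- destruct (nz_helper (fun U2 => F3X nu eps alpha beta 0 0 U2) (sqrt nu))
    as [U2 h].
  + lra.
  + cbv beta. unf. field. lra.
  + exists 0, 0, U2. now left.
- intros U hs HE X T. unfold structure_eqs.
  split; [| split].
  + drw hs. drw hs.
    apply (comb _ _ (eqE nu eps U X T) 0 (/ (sqrt nu)^3) 0 (HE X T) eq_refl).
    unf. unfold eqE, DX, DT.
    set (s := sqrt nu) in *. clearbody s. subst nu.
    field. lra.
  + drw hs. drw hs.
    apply (comb _ _ (eqE nu eps U X T) _ 0
      (- (/ ((sqrt nu)^3 * alpha^2) + DX U X T / ((sqrt nu)^2 * alpha))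
       + eps * (U X T / sqrt nu + / 3 * / (nu ^ 2 * sqrt nu) - / 3) / ((sqrt nu)^3 * alpha^2))
      (HE X T) Hrel).
    unf. unfold eqE, DX, DT.
    set (s := sqrt nu) in *. clearbody s. subst nu.
    destruct heps; subst eps; field; lra.
  + drw hs. drw hs.
    apply (comb _ _ (eqE nu eps U X T) _ (/ (sqrt nu)^3) (- / ((sqrt nu)^3 * alpha))
      (HE X T) Hrel).
    unf. unfold eqE, DX, DT.
    set (s := sqrt nu) in *. clearbody s. subst nu.
    destruct heps; subst eps; field; lra.
Qed.
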